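(* Let $(X,\le)$ be a non-empty strictly inductive poset, $f:X\to X$ and $a_0\in X$ with $a_0\le f(a_0)$. Let $W$ be the set of elements of $X$ that are the least upper bound of some $a_0$-chain. If $f$ is monotone on $W$ (i.e. $f(x)\le f(y)$ for all $x,y\in W$ with $x\le y$), then $\mathrm{lub}(W)$ exists and is a fixpoint of $f$.
   Context: A poset is strictly inductive if every non-empty chain (totally ordered subset) has a least upper bound $\mathrm{lub}$ in $X$. A subset $C\subseteq X$ is an $a_0$-chain (with respect to $f$) if: $C$ is well ordered by $\le$; $a_0$ is the least element of $C$; for every non-empty $P\subseteq C$, $\mathrm{lub}(P)$ exists and belongs to $C$; and for every $z\in C\setminus\{\mathrm{lub}(C)\}$ we have $f(z)\in C$, $z<f(z)$, and there is no $y\in C$ with $z<y<f(z)$. *)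

(* Defs.v *)
Section PosetDefs.
Context {X : Type} (le : X -> X -> Prop).

Definition lt (x y : X) : Prop := le x y /\ x <> y.

Definition is_partial_order : Prop :=
  (forall x, le x x) /\
  (forall x y, le x y -> le y x -> x = y) /\
  (forall x y z, le x y -> le y z -> le x z).

Definition upper_bound (S : X -> Prop) (u : X) : Prop :=
  forall s, S s -> le s u.

Definition is_lub (S : X -> Prop) (x : X) : Prop :=
  upper_bound S x /\ (forall u, upper_bound S u -> le x u).

Definition is_chain (S : X -> Prop) : Prop :=
  forall x y, S x -> S y -> le x y \/ le y x.

Definition nonempty (S : X -> Prop) : Prop := exists x, S x.

Definition strictly_inductive : Prop :=
  forall S, nonempty S -> is_chain S -> exists l, is_lub S l.

Definition well_ordered (S : X -> Prop) : Prop :=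
  is_chain S /\
  forall P : X -> Prop, (forall x, P x -> S x) -> nonempty P ->
    exists m, P m /\ forall p, P p -> le m p.

Definition a0_chain (f : X -> X) (a0 : X) (C : X -> Prop) : Prop :=
  well_ordered C /\
  C a0 /\ (forall c, C c -> le a0 c) /\
  (forall P : X -> Prop, (forall x, P x -> C x) -> nonempty P ->
     exists l, is_lub P l /\ C l) /\
  (forall z, C z -> ~ is_lub C z ->
     C (f z) /\ lt z (f z) /\ ~ (exists y, C y /\ lt z y /\ lt y (f z))).

Definition Wset (f : X -> X) (a0 : X) (x : X) : Prop :=
  exists C, a0_chain f a0 C /\ is_lub C x.

End PosetDefs.

(* Main.v *)
Require Import Defs.
From Stdlib Require Import Classical.

Lemma lub_unique {X} (le : X -> X -> Prop) S x y :
  is_partial_order le -> is_lub le S x -> is_lub le S y -> x = y.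
Proof. intros [Hr [Ha Ht]] [Ux Lx] [Uy Ly]. apply Ha; [apply Lx; exact Uy | apply Ly; exact Ux]. Qed.

Lemma chain_max {X} le f (a0:X) C : a0_chain le f a0 C -> exists m, C m /\ is_lub le C m.
Proof. intros [_ [Ha0 [_ [Hsub _]]]].
  destruct (Hsub C (fun x h => h) (ex_intro _ a0 Ha0)) as [l [H1 H2]]. eauto. Qed.

Lemma seg_aux2 {X} le (C A : X -> Prop) c0 : is_partial_order le -> is_chain le C ->
  (forall x, A x -> C x) -> (forall x y, A x -> C y -> le y x -> A y) ->
  C c0 -> ~ A c0 -> (forall x, C x -> ~ A x -> le c0 x) ->
  (forall a, A a -> lt le a c0) /\ (forall c, C c -> lt le c c0 -> A c).
Proof.
  intros [Hr [Ha Ht]] Hch HAC Hdown Cc0 nA Hmin. split.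
  - intros a Aa. destruct (Hch a c0 (HAC a Aa) Cc0) as [H|H].
    + split; auto. intro E; subst; auto.
    + exfalso. apply nA. eapply Hdown; eauto.
  - intros c Cc [Hle Hne]. apply NNPP. intro nAc. apply Hne. apply Ha; auto.
Qed.

Lemma seg_aux {X} le f (a0:X) (C A : X -> Prop) c0 p : is_partial_order le -> a0_chain le f a0 C ->
  (forall x, A x -> C x) -> C c0 -> ~ A c0 ->
  (forall a, A a -> lt le a c0) -> (forall c, C c -> lt le c c0 -> A c) ->
  is_lub le A p -> C p -> (A p -> c0 = f p) /\ (~ A p -> c0 = p).
Proof.
  intros HPO HC HAC Cc0 nA Hlt Hin [Up Lp] Cp. pose proof HPO as [Hr [Ha Ht]].
  destruct HC as [[Hch Hle] [Ha0 [Hge [Hsub Hsucc]]]].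
  split.
  - intros Ap. destruct (Hlt p Ap) as [Hpc Hpc'].
    assert (nl : ~ is_lub le C p).
    { intros [U _]. apply Hpc'. apply Ha; auto. }
    destruct (Hsucc p Cp nl) as [Cfp [[Hpf Hpf'] Hnb]].
    destruct (Hch c0 (f p) Cc0 Cfp) as [H|H].
    + apply NNPP; intro Hne. apply Hnb. exists c0. repeat split; auto.
    + apply NNPP; intro Hne. assert (A (f p)).
      { apply Hin; auto. split; auto; intro E; apply Hne; auto. }
      apply Hpf'. apply Ha; auto.
  - intros nAp. assert (le p c0) by (apply Lp; intros a Aa; apply Hlt; auto).
    apply NNPP; intro Hne. apply nAp. apply Hin; auto. split; auto; intro E; apply Hne; auto.
Qed.

Lemma seg {X} le f (a0:X) C D : is_partial_order le -> a0_chain le f a0 C -> a0_chain le f a0 D ->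
  (forall x, C x -> D x /\ forall y, D y -> le y x -> C y) \/
  (forall x, D x -> C x /\ forall y, C y -> le y x -> D y).
Proof.
  intros HPO HC HD. pose proof HPO as [Hr [Ha Ht]].
  pose proof HC as [[HchC HleC] [Ha0C [HgeC [HsubC HsuccC]]]].
  pose proof HD as [[HchD HleD] [Ha0D [HgeD [HsubD HsuccD]]]].
  set (A := fun x => C x /\ D x /\ (forall y, C y -> le y x -> D y) /\ (forall y, D y -> le y x -> C y)).
  destruct (classic (forall x, C x -> A x)) as [HCA|HCA].
  { left. intros x Cx. destruct (HCA x Cx) as [_ [Dx [_ H]]]. auto. }
  destruct (classic (forall x, D x -> A x)) as [HDA|HDA].
  { right. intros x Dx. destruct (HDA x Dx) as [Cx [_ [H _]]]. auto. }
  exfalso.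
  assert (AC : forall x, A x -> C x) by (intros x [h _]; exact h).
  assert (AD : forall x, A x -> D x) by (intros x [_ [h _]]; exact h).
  assert (downC : forall x y, A x -> C y -> le y x -> A y).
  { intros x y [Cx [Dx [H1 H2]]] Cy Hyx. assert (Dy : D y) by auto.
    split; [|split; [|split]]; auto; intros z Hz Hzy;
      [apply H1 | apply H2]; [exact Hz | exact (Ht _ _ _ Hzy Hyx) | exact Hz | exact (Ht _ _ _ Hzy Hyx)]. }
  assert (downD : forall x y, A x -> D y -> le y x -> A y).
  { intros x y [Cx [Dx [H1 H2]]] Dy Hyx. assert (Cy : C y) by auto.
    split; [|split; [|split]]; auto; intros z Hz Hzy;
      [apply H1 | apply H2]; [exact Hz | exact (Ht _ _ _ Hzy Hyx) | exact Hz | exact (Ht _ _ _ Hzy Hyx)]. }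
  destruct (not_all_ex_not _ _ HCA) as [xc Hxc]. apply imply_to_and in Hxc.
  destruct (HleC (fun x => C x /\ ~ A x) (fun x h => proj1 h) (ex_intro _ xc Hxc))
    as [c0 [[Cc0 nAc0] Hminc]].
  destruct (not_all_ex_not _ _ HDA) as [xd Hxd]. apply imply_to_and in Hxd.
  destruct (HleD (fun x => D x /\ ~ A x) (fun x h => proj1 h) (ex_intro _ xd Hxd))
    as [d0 [[Dd0 nAd0] Hmind]].
  destruct (seg_aux2 le C A c0 HPO HchC AC downC Cc0 nAc0 (fun x h1 h2 => Hminc x (conj h1 h2)))
    as [HltC HinC].
  destruct (seg_aux2 le D A d0 HPO HchD AD downD Dd0 nAd0 (fun x h1 h2 => Hmind x (conj h1 h2)))
    as [HltD HinD].
  assert (HAa0 : A a0).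
  { split; [|split; [|split]]; auto; intros y Hy Hya.
    - rewrite (Ha y a0 Hya (HgeC y Hy)); auto.
    - rewrite (Ha y a0 Hya (HgeD y Hy)); auto. }
  destruct (HsubC A AC (ex_intro _ a0 HAa0)) as [p [Hlp Cp]].
  destruct (HsubD A AD (ex_intro _ a0 HAa0)) as [p' [Hlp' Dp']].
  assert (p' = p) by (eapply lub_unique; eauto). subst p'.
  destruct (seg_aux le f a0 C A c0 p HPO HC AC Cc0 nAc0 HltC HinC Hlp Cp) as [E1 E2].
  destruct (seg_aux le f a0 D A d0 p HPO HD AD Dd0 nAd0 HltD HinD Hlp Dp') as [E3 E4].
  assert (Heq : c0 = d0).
  { destruct (classic (A p)) as [Ap|nAp].
    - rewrite E1, E3; auto.
    - rewrite E2, E4; auto. }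
  subst d0. apply nAc0.
  split; [|split; [|split]]; auto.
  - intros y Cy Hy. destruct (classic (y = c0)) as [->|Hne]; auto.
    apply AD. apply HinC; auto. split; auto.
  - intros y Dy Hy. destruct (classic (y = c0)) as [->|Hne]; auto.
    apply AC. apply HinD; auto. split; auto.
Qed.

Definition Uset {X} (le : X -> X -> Prop) f (a0:X) x := exists C, a0_chain le f a0 C /\ C x.

Lemma seg_down {X} le f (a0:X) C D x d : is_partial_order le ->
  a0_chain le f a0 C -> a0_chain le f a0 D -> C x -> D d -> le x d -> D x.
Proof.
  intros HPO HC HD Cx Dd Hle.
  destruct (seg le f a0 C D HPO HC HD) as [H|H].
  - exact (proj1 (H x Cx)).
  - exact (proj2 (H d Dd) x Cx Hle).
Qed.

Lemma U_chain {X} le f (a0:X) : is_partial_order le -> is_chain le (Uset le f a0).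
Proof.
  intros HPO x y [C [HC Cx]] [D [HD Dy]].
  destruct (seg le f a0 C D HPO HC HD) as [H|H].
  - exact (proj1 (proj1 HD) x y (proj1 (H x Cx)) Dy).
  - exact (proj1 (proj1 HC) x y Cx (proj1 (H y Dy))).
Qed.

Lemma U_least {X} le f (a0:X) (P : X -> Prop) : is_partial_order le ->
  (forall x, P x -> Uset le f a0 x) -> nonempty P ->
  exists m, P m /\ forall p, P p -> le m p.
Proof.
  intros HPO HP [x Px]. destruct (HP x Px) as [C [HC Cx]].
  destruct (proj2 (proj1 HC) (fun y => P y /\ C y) (fun y h => proj2 h) (ex_intro _ x (conj Px Cx)))
    as [m [[Pm Cm] Hm]].
  exists m. split; auto. intros p Pp. destruct (HP p Pp) as [D [HD Dp]].
  destruct (U_chain le f a0 HPO m p (HP m Pm) (HP p Pp)) as [H|H]; auto.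
  apply Hm. split; auto. exact (seg_down le f a0 D C p m HPO HD HC Dp Cm H).
Qed.

Lemma U_Wset {X} le f (a0:X) x : is_partial_order le -> Uset le f a0 x -> Wset le f a0 x.
Proof.
  intros HPO [C [HC Cx]]. pose proof HPO as [Hr [Ha Ht]].
  pose proof HC as [[Hch Hle] [Ha0 [Hge [Hsub Hsucc]]]].
  set (C' := fun y => C y /\ le y x).
  assert (HL : is_lub le C' x).
  { split. - intros s [_ H]; auto. - intros u Hu. apply Hu. split; auto. }
  exists C'. split; auto.
  split; [split|split; [|split; [|split]]].
  - intros a b [Ca _] [Cb _]. auto.
  - intros P HP HnP. apply Hle; auto. intros y Py. apply (HP y Py).
  - split; auto.
  - intros c [Cc _]; auto.
  - intros P HP HnP. destruct (Hsub P (fun y h => proj1 (HP y h)) HnP) as [l [[Ul Ll] Cl]].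
    exists l. split; [split; auto|]. split; auto. apply Ll. intros s Ps. apply (HP s Ps).
  - intros z [Cz Hzx] nl.
    assert (Hne : z <> x) by (intro E; subst; auto).
    assert (nlC : ~ is_lub le C z).
    { intros [Uz _]. apply Hne. apply Ha; auto. }
    destruct (Hsucc z Cz nlC) as [Cfz [Hlt Hnb]].
    split; [|split; auto].
    + split; auto. destruct (Hch x (f z) Cx Cfz) as [H|H]; auto.
      destruct (classic (x = f z)) as [E|E]. { rewrite <- E; auto. }
      exfalso. apply Hnb. exists x. repeat split; auto.
    + intros [y [[Cy _] H]]. apply Hnb. exists y. auto.
Qed.

Lemma Wset_U {X} le f (a0:X) x : is_partial_order le -> Wset le f a0 x -> Uset le f a0 x.
Proof.
  intros HPO [C [HC Hl]]. destruct (chain_max le f a0 C HC) as [m [Cm Hm]].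
  assert (x = m) by (eapply lub_unique; eauto). subst. exists C; auto.
Qed.

Lemma single_chain {X} le f (a0:X) : is_partial_order le -> a0_chain le f a0 (fun x => x = a0).
Proof.
  intros [Hr [Ha Ht]].
  assert (HL : is_lub le (fun x => x = a0) a0).
  { split. - intros s ->; auto. - intros u Hu; apply Hu; auto. }
  split; [split|split; [|split; [|split]]]; auto.
  - intros x y -> ->; left; auto.
  - intros P HP [x Px]. exists x. split; auto. intros p Pp. rewrite (HP x Px), (HP p Pp); auto.
  - intros c ->; auto.
  - intros P HP [x Px]. exists a0. split; auto. split.
    + intros s Ps. rewrite (HP s Ps); auto.
    + intros u Hu. rewrite <- (HP x Px). apply Hu; auto.
  - intros z -> nl. contradiction.
Qed.

Lemma extension {X} le f (a0:X) C m : is_partial_order le -> a0_chain le f a0 C ->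
  is_lub le C m -> lt le m (f m) ->
  a0_chain le f a0 (fun x => C x \/ x = f m) /\ is_lub le (fun x => C x \/ x = f m) (f m).
Proof.
  intros HPO HC Hm [Hmf Hmf']. pose proof HPO as [Hr [Ha Ht]].
  pose proof HC as [[Hch Hle] [Ha0 [Hge [Hsub Hsucc]]]].
  destruct (chain_max le f a0 C HC) as [m' [Cm Hm']].
  assert (m' = m) by (eapply lub_unique; eauto). subst m'.
  assert (Hcm : forall c, C c -> le c m) by (apply (proj1 Hm)).
  set (E := fun x => C x \/ x = f m).
  assert (HEb : forall x, E x -> le x (f m)).
  { intros x [Cx| ->]; eauto. }
  assert (HL : is_lub le E (f m)).
  { split; auto. intros u Hu. apply Hu. right; auto. }
  split; auto.
  split; [split|split; [|split; [|split]]].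
  - intros x y [Cx| ->] [Cy| ->]; [apply Hch; auto | left; apply HEb; left; auto | right; apply HEb; left; auto | left; auto].
  - intros P HP HnP. destruct (classic (exists x, P x /\ C x)) as [[x [Px Cx]]|Hno].
    + destruct (Hle (fun y => P y /\ C y) (fun y h => proj2 h) (ex_intro _ x (conj Px Cx)))
        as [m1 [[Pm1 Cm1] Hm1]].
      exists m1. split; auto. intros p Pp. destruct (HP p Pp) as [Cp| ->].
      * apply Hm1; auto.
      * eauto.
    + destruct HnP as [x Px]. exists x. split; auto.
      assert (Hall : forall p, P p -> p = f m).
      { intros p Pp. destruct (HP p Pp) as [Cp|Ep]; auto. exfalso; apply Hno; eauto. }
      intros p Pp. rewrite (Hall x Px), (Hall p Pp); auto.
  - left; auto.
  - intros c [Cc| ->]; eauto.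
  - intros P HP HnP. destruct (classic (P (f m))) as [Pf|nPf].
    + exists (f m). split; [|right; auto]. split.
      * intros s Ps; auto.
      * intros u Hu; auto.
    + assert (HPC : forall s, P s -> C s).
      { intros s Ps. destruct (HP s Ps) as [Cs|Es]; auto. subst; contradiction. }
      destruct (Hsub P HPC HnP) as [l [Hl Cl]]. exists l. split; auto. left; auto.
  - intros z Ez nl. assert (Cz : C z).
    { destruct Ez as [Cz|Ez]; auto. subst; contradiction. }
    destruct (classic (z = m)) as [->|Hne].
    + split; [right; auto|split; [split; auto|]].
      intros [y [Ey [[H1 H2] [H3 H4]]]]. destruct Ey as [Cy| ->].
      * apply H2. apply Ha; auto.
      * apply H4; auto.
    + assert (nlC : ~ is_lub le C z).
      { intros Hz. apply Hne. eapply lub_unique; eauto. }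
      destruct (Hsucc z Cz nlC) as [Cfz [Hlt Hnb]].
      split; [left; auto|split; auto].
      intros [y [Ey [H1 [H3 H4]]]]. destruct Ey as [Cy| ->].
      * apply Hnb. exists y. split; [exact Cy | split; [exact H1 | split; auto]].
      * apply H4. apply Ha; auto. apply Ht with m; auto.
Qed.

Lemma ind_up {X} le f (a0:X) C : is_partial_order le ->
  (forall x y, Wset le f a0 x -> Wset le f a0 y -> le x y -> le (f x) (f y)) ->
  le a0 (f a0) -> a0_chain le f a0 C -> forall x, C x -> le x (f x).
Proof.
  intros HPO Hmono Ha0f HC. pose proof HPO as [Hr [Ha Ht]].
  pose proof HC as [[Hch Hle] [Ha0 [Hge [Hsub Hsucc]]]].
  assert (HW : forall y, C y -> Wset le f a0 y).
  { intros y Cy. apply U_Wset; auto. exists C; auto. }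
  intros x Cx. apply NNPP; intro Hn.
  destruct (Hle (fun y => C y /\ ~ le y (f y)) (fun y h => proj1 h) (ex_intro _ x (conj Cx Hn)))
    as [x1 [[Cx1 nx1] Hmin]].
  clear x Cx Hn.
  assert (good : forall y, C y -> lt le y x1 -> le y (f y)).
  { intros y Cy [H1 H2]. apply NNPP; intro H. apply H2. apply Ha; auto. }
  assert (Hne : a0 <> x1) by (intro E; subst; auto).
  set (Q := fun y => C y /\ lt le y x1).
  destruct (Hsub Q (fun y h => proj1 h) (ex_intro _ a0 (conj Ha0 (conj (Hge x1 Cx1) Hne))))
    as [p [[Up Lp] Cp]].
  assert (Hpx : le p x1) by (apply Lp; intros y [_ [h _]]; auto).
  destruct (classic (p = x1)) as [Ep|Ep].
  - subst p. apply nx1. apply Lp. intros y [Cy Hy].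
    apply Ht with (f y); [apply good; auto|]. apply Hmono; auto. apply Hy.
  - assert (Qp : Q p) by (split; auto; split; auto).
    assert (nl : ~ is_lub le C p).
    { intros [Ub _]. apply Ep. apply Ha; auto. }
    destruct (Hsucc p Cp nl) as [Cfp [[Hpf Hpf'] Hnb]].
    assert (Heq : x1 = f p).
    { destruct (Hch x1 (f p) Cx1 Cfp) as [H|H].
      - apply NNPP; intro ne. apply Hnb. exists x1. repeat split; auto.
      - apply NNPP; intro ne. assert (Q (f p)).
        { split; auto. split; auto. }
        apply Hpf'. apply Ha; auto. }
    apply nx1. rewrite Heq. apply Hmono; auto.
Qed.

Theorem mainTheorem3 (X : Type) (le : X -> X -> Prop) (f : X -> X) (a0 : X) :
  is_partial_order le ->
  (exists x : X, True) ->
  strictly_inductive le ->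
  le a0 (f a0) ->
  (forall x y, Wset le f a0 x -> Wset le f a0 y -> le x y -> le (f x) (f y)) ->
  exists w, is_lub le (Wset le f a0) w /\ f w = w.
Proof.
  intros HPO _ HSI Ha0f Hmono. pose proof HPO as [Hr [Ha Ht]].
  set (U := Uset le f a0).
  assert (Ua0 : U a0) by (exists (fun x => x = a0); split; auto; apply single_chain; auto).
  assert (Uge : forall x, U x -> le a0 x).
  { intros x [C [HC Cx]]. exact (proj1 (proj2 (proj2 HC)) x Cx). }
  destruct (HSI U (ex_intro _ a0 Ua0) (U_chain le f a0 HPO)) as [w [Uw Lw]].
  set (E := fun x => U x \/ x = w).
  assert (lubE : is_lub le E w).
  { split. - intros s [Us| ->]; auto. - intros u Hu. apply Lw. intros s Us. apply Hu. left; auto. }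
  assert (HE : a0_chain le f a0 E).
  { split; [split|split; [|split; [|split]]].
    - intros x y [Ux| ->] [Uy| ->]; auto. apply (U_chain le f a0 HPO); auto.
    - intros P HP HnP. destruct (classic (exists x, P x /\ U x)) as [[x [Px Ux]]|Hno].
      + destruct (U_least le f a0 (fun y => P y /\ U y) HPO (fun y h => proj2 h) (ex_intro _ x (conj Px Ux)))
          as [m1 [[Pm1 Um1] Hm1]].
        exists m1. split; auto. intros p Pp. destruct (HP p Pp) as [Up| ->].
        * apply Hm1; auto.
        * apply Uw; auto.
      + destruct HnP as [x Px]. exists x. split; auto.
        assert (Hall : forall p, P p -> p = w).
        { intros p Pp. destruct (HP p Pp) as [Up|Ep]; auto. exfalso; apply Hno; eauto. }
        intros p Pp. rewrite (Hall x Px), (Hall p Pp); auto.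
    - left; auto.
    - intros c [Uc| ->]; auto.
    - intros P HP HnP. destruct (classic (P w)) as [Pw|nPw].
      + exists w. split; [|right; auto]. split.
        * intros s Ps. apply (proj1 lubE); auto.
        * intros u Hu; auto.
      + assert (HPU : forall s, P s -> U s).
        { intros s Ps. destruct (HP s Ps) as [Us|Es]; auto. subst; contradiction. }
        destruct (classic (exists d, U d /\ upper_bound le P d)) as [[d [[D [HD Dd]] Hd]]|Hno].
        * assert (HPD : forall s, P s -> D s).
          { intros s Ps. destruct (HPU s Ps) as [S [HS Ss]].
            exact (seg_down le f a0 S D s d HPO HS HD Ss Dd (Hd s Ps)). }
          destruct (proj1 (proj2 (proj2 (proj2 HD))) P HPD HnP) as [l [Hl Dl]].
          exists l. split; auto. left. exists D; auto.
        * exists w. split; [|right; auto]. split.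
          -- intros s Ps. apply Uw; auto.
          -- intros u Hu. apply Lw. intros x Ux.
             assert (nub : ~ upper_bound le P x) by (intro H; apply Hno; eauto).
             destruct (not_all_ex_not _ _ nub) as [p Hp]. apply imply_to_and in Hp.
             destruct Hp as [Pp nle].
             destruct (U_chain le f a0 HPO x p Ux (HPU p Pp)) as [H|H].
             ++ apply Ht with p; auto.
             ++ contradiction.
    - intros z Ez nl.
      assert (Hzw : z <> w) by (intro E0; subst; contradiction).
      assert (Uz : U z) by (destruct Ez as [Uz|Ez]; auto; contradiction).
      assert (nub : ~ upper_bound le U z).
      { intro H. apply Hzw. apply Ha; auto. }
      destruct (not_all_ex_not _ _ nub) as [x Hx]. apply imply_to_and in Hx.
      destruct Hx as [Ux nle].
      assert (Hzx : le z x).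
      { destruct (U_chain le f a0 HPO z x Uz Ux) as [H|H]; auto. contradiction. }
      destruct Ux as [D [HD Dx]]. destruct Uz as [S [HS Sz]].
      assert (Dz : D z) by exact (seg_down le f a0 S D z x HPO HS HD Sz Dx Hzx).
      assert (nlD : ~ is_lub le D z) by (intros [Ub _]; apply nle; auto).
      destruct (proj2 (proj2 (proj2 (proj2 HD))) z Dz nlD) as [Dfz [Hlt Hnb]].
      split; [left; exists D; auto|split; auto].
      intros [y [Ey [H1 [H3 H4]]]]. destruct Ey as [[D' [HD' D'y]]| ->].
      + apply Hnb. exists y. split; [exact (seg_down le f a0 D' D y (f z) HPO HD' HD D'y Dfz H3) | split; [exact H1 | split; auto]].
      + apply H4. apply Ha; auto. apply Uw. exists D; auto. }
  assert (Ww : Wset le f a0 w) by (exists E; auto).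
  assert (Uw' : U w) by (apply Wset_U; auto).
  exists w. split.
  - split.
    + intros s Ws. apply Uw. apply Wset_U; auto.
    + intros u Hu. apply Lw. intros s Us. apply Hu. apply U_Wset; auto.
  - assert (Hwf : le w (f w)).
    { destruct Uw' as [C [HC Cw]]. exact (ind_up le f a0 C HPO Hmono Ha0f HC w Cw). }
    apply NNPP; intro ne.
    destruct (extension le f a0 E w HPO HE lubE (conj Hwf (fun e => ne (eq_sym e)))) as [HE' HL'].
    assert (Uf : U (f w)) by (apply Wset_U; auto; eexists; split; eauto).
    apply ne. apply Ha; auto.
Qed.
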